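(* For $n\ge 1$, the number of shallow $231$-avoiding centrosymmetric permutations in $S_n$ equals $2^{\lfloor n/2\rfloor}$ (in fact every $231$-avoiding centrosymmetric permutation is shallow).
   Context: For $\pi\in S_n$: $D(\pi)=\sum_{i}|\pi_i-i|$, $I(\pi)$ is the number of inversions, $T(\pi)=n-\mathrm{cyc}(\pi)$ with $\mathrm{cyc}$ the number of cycles in the disjoint cycle decomposition; $\pi$ is shallow if $I(\pi)+T(\pi)=D(\pi)$. A permutation avoids a pattern $\sigma$ if it has no subsequence order-isomorphic to $\sigma$. The reverse-complement $\pi^{rc}$ is defined by $\pi^{rc}_{n+1-i}=n+1-\pi_i$; $\pi$ is centrosymmetric if $\pi=\pi^{rc}$. *)

(* Defs.v *)
From mathcomp Require Import all_boot all_order all_fingroup.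
Set Implicit Arguments. Unset Strict Implicit. Unset Printing Implicit Defensive.

Section PermStats.
Variable n : nat.

Definition absdiff (a b : nat) : nat := (a - b) + (b - a).

(* D(pi) = sum_i |pi_i - i|  (0-indexed; the shift does not change differences) *)
Definition Dstat (s : 'S_n) : nat := \sum_(i < n) absdiff (s i) i.

Definition Istat (s : 'S_n) : nat :=
  #|[set p : 'I_n * 'I_n | (p.1 < p.2) && (s p.2 < s p.1)]|.

(* cyc(pi) = number of cycles (fixed points count as 1-cycles) *)
Definition cyc (s : 'S_n) : nat := #|porbits s|.

Definition Tstat (s : 'S_n) : nat := n - cyc s.

Definition shallow (s : 'S_n) : bool := Istat s + Tstat s == Dstat s.

Definition avoids231 (s : 'S_n) : bool :=
  [forall i : 'I_n, forall j : 'I_n, forall k : 'I_n,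
     ~~ [&& i < j, j < k, s k < s i & s i < s j]].

(* reverse-complement: pi^rc_{n+1-i} = n+1-pi_i, i.e. (0-indexed)
   pi^rc (rev_ord i) = rev_ord (pi i); centrosymmetric iff pi = pi^rc *)
Definition centrosymmetric (s : 'S_n) : bool :=
  [forall i : 'I_n, s (rev_ord i) == rev_ord (s i)].

End PermStats.

(* Main.v *)
Require Import Defs.
From mathcomp Require Import all_boot all_order all_fingroup zify.
Set Implicit Arguments. Unset Strict Implicit. Unset Printing Implicit Defensive.

Section Blocks.
Variables (C : nat -> bool) (n : nat).
Hypothesis C0 : C 0.
Hypothesis Cn : forall c, n <= c -> C c.

Lemma lo_ex x : exists c, C c && (c <= x).
Proof. by exists 0; rewrite C0. Qed.
Lemma lo_ub x : forall c, C c && (c <= x) -> c <= x.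
Proof. by move=> c /andP[]. Qed.
Definition lo x := ex_maxn (lo_ex x) (@lo_ub x).

Lemma hi_ex x : exists c, C c && (x < c).
Proof. exists (maxn n x.+1); rewrite Cn ?leq_maxl //=; lia. Qed.
Definition hi x := ex_minn (hi_ex x).

Lemma loP x : [/\ C (lo x), lo x <= x & forall c, C c -> c <= x -> c <= lo x].
Proof.
rewrite /lo; case: ex_maxnP => i /andP[Ci ix] H; split => // c Cc cx.
by apply: H; rewrite Cc cx.
Qed.

Lemma hiP x : [/\ C (hi x), x < hi x & forall c, C c -> x < c -> hi x <= c].
Proof.
rewrite /hi; case: ex_minnP => i /andP[Ci ix] H; split => // c Cc cx.
by apply: H; rewrite Cc cx.
Qed.

Lemma hi_le x : x < n -> hi x <= n.
Proof. by move=> xn; case: (hiP x) => _ _ ->; rewrite ?Cn. Qed.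

Lemma block_noC x c : lo x < c < hi x -> ~~ C c.
Proof.
case: (loP x) (hiP x) => _ _ H1 [_ _ H2] /andP[h1 h2]; apply/negP => Cc.
case: (leqP c x) => cx.
  by have := H1 _ Cc cx; lia.
by have := H2 _ Cc cx; lia.
Qed.

Lemma block_unique a b y : a <= y < b -> C a -> C b ->
  (forall c, a < c < b -> ~~ C c) -> lo y = a /\ hi y = b.
Proof.
move=> /andP[ay yb] Ca Cb H.
case: (loP y) (hiP y) => Cl ly H1 [Ch yh H2].
have al := H1 _ Ca ay; have hb := H2 _ Cb yb.
split.
  apply/eqP; rewrite eqn_leq al andbT; apply: contraLR Cl; rewrite -ltnNge => la.
  by apply: H; lia.
apply/eqP; rewrite eqn_leq hb /=; apply: contraLR Ch; rewrite -ltnNge => hb'.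
by apply: H; lia.
Qed.

Lemma block_dich x y :
  (lo x = lo y /\ hi x = hi y) \/ hi x <= lo y \/ hi y <= lo x.
Proof.
case: (loP x) (hiP x) (loP y) (hiP y) => Clx lx Hlx [Chx xh Hhx] [Cly ly Hly] [Chy yh Hhy].
case: (leqP x y) => xy.
  case: (ltnP y (hi x)) => yhx.
    have [] := block_unique (a := lo x) (b := hi x) (y := y) _ Clx Chx (@block_noC x).
      lia.
    by move=> -> ->; left.
  by right; left; apply: Hly.
case: (ltnP x (hi y)) => xhy.
  have [] := block_unique (a := lo y) (b := hi y) (y := x) _ Cly Chy (@block_noC y).
    lia.
  by move=> -> ->; left.
by right; right; apply: Hlx.
Qed.

End Blocks.
Section Good.
Variables (n : nat) (s : 'S_n).

Hypothesis A231 : forall i j k : 'I_n, i < j -> j < k -> s k < s i -> s i < s j -> False.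
Hypothesis A312 : forall i j k : 'I_n, i < j -> j < k -> s j < s k -> s k < s i -> False.

Lemma sinj_nat (x y : 'I_n) : (s x == s y :> nat) = (x == y).
Proof. by rewrite (inj_eq val_inj) (inj_eq perm_inj). Qed.

Lemma btw (i j k : 'I_n) : i < j -> s j < s i -> i < k < j -> s j < s k < s i.
Proof.
move=> ij sji /andP[ik kj].
have nki : k != i by rewrite -(inj_eq val_inj) /=; lia.
have nkj : k != j by rewrite -(inj_eq val_inj) /=; lia.
rewrite -sinj_nat in nki; rewrite -sinj_nat in nkj.
case: (ltngtP (s k) (s i)) nki => // ski _; last first.
  by exfalso; apply: (A231 ik kj sji ski).
case: (ltngtP (s j) (s k)) nkj => // skj _.
by exfalso; apply: (A312 ik kj skj sji).
Qed.

Lemma posb (i j k : 'I_n) : i < j -> s j < s i -> s j < s k < s i -> i < k < j.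
Proof.
move=> ij sji /andP[h1 h2].
case: (ltngtP k i) => ki.
- by exfalso; apply: (A231 ki ij h1 h2).
- case: (ltngtP k j) => kj; first by lia.
  + by exfalso; apply: (A312 ij kj h1 h2).
  + by move: h1; rewrite (val_inj kj) ltnn.
- by move: h2; rewrite (val_inj ki) ltnn.
Qed.

Lemma good_aux d : forall i j : 'I_n, s i - s j = d.+1 -> i < j -> s j < s i ->
  s i + i = s j + j.
Proof.
elim: d => [|d IH] i j hd ij sji.
  case: (ltnP i.+1 j) => h; last by lia.
  have [m mE] : exists m : 'I_n, val m = i.+1.
    have mn : i.+1 < n by have := ltn_ord j; lia.
    by exists (Ordinal mn).
  have := btw ij sji (k := m); rewrite mE; lia.
have vn : s i - 1 < n by have := ltn_ord (s i); lia.
pose v := Ordinal vn.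
pose k := (s^-1)%g v.
have skE : nat_of_ord (s k) = s i - 1 by rewrite /k permKV.
have := posb (k := k) ij sji; rewrite skE => /(_ ltac:(lia)) /andP[ik kj].
have := IH k j ltac:(lia) kj ltac:(lia) => IHk.
case: (ltnP i.+1 k) => h; last by lia.
have mn : i.+1 < n by have := ltn_ord k; lia.
have := btw (j := k) (k := Ordinal mn) ik ltac:(lia); rewrite /= skE; lia.
Qed.

Lemma good (i j : 'I_n) : i < j -> s j < s i -> s i + i = s j + j.
Proof.
move=> ij sji; apply: (@good_aux (s i - s j).-1) => //; lia.
Qed.

Definition Cs (c : nat) : bool := [forall x : 'I_n, (x < c) == (s x < c)].

Lemma CsE c : Cs c -> forall x : 'I_n, (x < c) = (s x < c).
Proof. by move/forallP => H x; exact: (eqP (H x)). Qed.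

Lemma Cs0 : Cs 0.
Proof. by apply/forallP => x. Qed.

Lemma Csn c : n <= c -> Cs c.
Proof.
move=> nc; apply/forallP => x.
by rewrite (leq_trans (ltn_ord x) nc) (leq_trans (ltn_ord (s x)) nc).
Qed.

Lemma structure a b (i : 'I_n) : a <= i < b -> Cs a -> Cs b ->
  (forall c, a < c < b -> ~~ Cs c) -> nat_of_ord (s i) = a + b - 1 - i.
Proof.
move=> /andP[ai ib] Ca Cb H.
have bn : b <= n.
  case: (leqP b n) => // nb; have := H n; rewrite Csn // => Hn.
  suff: false by []; apply: Hn; have := ltn_ord i; lia.
have vn : b - 1 < n by lia.
pose p := (s^-1)%g (Ordinal vn).
have spE : nat_of_ord (s p) = b - 1 by rewrite /p permKV.
have pb : p < b by rewrite (CsE Cb) spE; lia.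
have ap : a <= p by rewrite leqNgt (CsE Ca) spE; lia.
have form : forall k : 'I_n, p <= k < b -> nat_of_ord (s k) = b - 1 + p - k.
  move=> k /andP[pk kb]; case: (ltngtP p k) pk => // pk _; last first.
    by rewrite -(val_inj pk) spE; lia.
  have skb : s k < b by rewrite -(CsE Cb).
  have skn : nat_of_ord (s k) != b - 1.
    by rewrite -spE sinj_nat -(inj_eq val_inj) /=; lia.
  have := good pk ltac:(lia); lia.
have Cp : Cs p.
  apply/forallP => x; apply/eqP.
  case: (ltnP x a) => xa.
    have := xa; rewrite (CsE Ca) => sxa; lia.
  case: (ltnP x p) => xp.
    apply/esym; apply: contraTT isT; rewrite -leqNgt => psx.
    have sxb : s x < b by rewrite -(CsE Cb); lia.
    have kn : b - 1 + p - s x < n by lia.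
    pose k := Ordinal kn.
    have := form k; rewrite /= => /(_ ltac:(lia)) skE.
    have : nat_of_ord (s k) == nat_of_ord (s x) by rewrite skE; apply/eqP; lia.
    by rewrite sinj_nat => /eqP kx; move: xp; rewrite -kx /=; lia.
  case: (ltnP x b) => xb.
    by have := form x ltac:(lia); lia.
  by have := xb; rewrite leqNgt (CsE Cb) -leqNgt; lia.
have pa : nat_of_ord p = a.
  apply/eqP; rewrite eqn_leq ap andbT; apply: contraLR Cp; rewrite -ltnNge => ap'.
  by apply: H; lia.
by have := form i; lia.
Qed.


Lemma interval_sum a b m :
  \sum_(0 <= y < m) ((a < y) && (y < b)) = minn m b - a.+1.
Proof.
elim: m => [|m IH]; first by rewrite big_geq //; lia.
rewrite big_nat_recr //= IH; lia.
Qed.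

Lemma cyc_inv (T : finType) (p : {perm T}) : (forall x, p (p x) = x) ->
  \sum_x (p x != x) + 2 * #|porbits p| = 2 * #|T|.
Proof.
move=> pinv.
have orbE x : porbit p x = [set x; p x].
  apply/setP => y; apply/porbitP/set2P.
    case=> i ->; elim: i => [|i [IH|IH]]; first by left; rewrite expg0 perm1.
      by right; rewrite expgSr permM IH.
    by left; rewrite expgSr permM IH pinv.
  by case=> ->; [exists 0; rewrite expg0 perm1 | exists 1; rewrite expg1].
have H1 : #|T| = \sum_(O in porbits p) \sum_(x in T | porbit p x == O) 1.
  by rewrite -sum1_card (partition_big_imset (porbit p)).
have H2 : \sum_x (p x != x : nat) =
    \sum_(O in porbits p) \sum_(x in T | porbit p x == O) (p x != x : nat).
  rewrite -(partition_big_imset (porbit p)); by apply: eq_bigl.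
rewrite H1 H2 -sum1_card !big_distrr -big_split /=.
apply: eq_bigr => O /imsetP[y _ ->].
have E : forall F : T -> nat, \sum_(i in T | porbit p i == porbit p y) F i =
    \sum_(i in [set y; p y]) F i.
  by move=> F; apply: eq_bigl => x; rewrite inE eq_porbit_mem orbE.
rewrite !E.
case: (eqVneq (p y) y) => hy.
  rewrite hy setUid big_set1 sum1_card cards1 hy eqxx; lia.
rewrite (eq_bigr (fun _ => 1)); last first.
  by move=> x /set2P[->|->]; rewrite ?hy // pinv eq_sym hy.
by rewrite !sum1_card cards2 eq_sym hy; lia.
Qed.

Local Notation L x := (lo Cs0 x).
Local Notation H x := (hi Cs0 Csn x).

Lemma sE (x : 'I_n) : nat_of_ord (s x) = L x + H x - 1 - x.
Proof.
case: (loP Cs0 x) (hiP Cs0 Csn x) => Cl lx _ [Ch xh _].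
apply: structure => //; first by rewrite lx xh.
exact: block_noC.
Qed.

Lemma Hle (x : 'I_n) : H x <= n.
Proof. exact: hi_le. Qed.

Lemma LH (x : 'I_n) : L x <= x < H x.
Proof. by case: (loP Cs0 x) (hiP Cs0 Csn x) => _ -> _ [_ -> _]. Qed.

Lemma sinv (x : 'I_n) : s (s x) = x.
Proof.
apply: val_inj => /=.
have := LH x; have := sE x => e1 h1.
case: (loP Cs0 x) (hiP Cs0 Csn x) => Cl _ _ [Ch _ _].
have [] := block_unique Cs0 Csn (a := L x) (b := H x) (y := s x) _ Cl Ch (@block_noC _ _ Cs0 Csn x).
  lia.
move=> e2 e3; rewrite (sE (s x)) e2 e3; lia.
Qed.

Definition inv (x y : 'I_n) : nat := (x < y) && (s y < s x).
Definition sb (x y : 'I_n) : nat := ((x < y) && (y < s x)) || ((s x < y) && (y < x)).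
Definition ee (x y : 'I_n) : nat := (nat_of_ord y == s x) && (nat_of_ord (s x) != x).

Lemma ident_c1 x' y' sx sy : sx + x' = sy + y' ->
 ((x' < y') && (sy < sx)) + ((y' < x') && (sx < sy)) =
 ((x' < y') && (y' < sx) || (sx < y') && (y' < x')) +
 ((y' < x') && (x' < sy) || (sy < x') && (x' < y')) +
 ((y' == sx) && (sx != x')).
Proof. move=> e; case: (ltngtP x' y') => h; case: (ltngtP y' sx) => h2; lia. Qed.

Lemma ident_c2 x' y' sx sy hx ly : x' < hx -> sx < hx -> hx <= ly -> ly <= y' -> ly <= sy ->
 ((x' < y') && (sy < sx)) + ((y' < x') && (sx < sy)) =
 ((x' < y') && (y' < sx) || (sx < y') && (y' < x')) +
 ((y' < x') && (x' < sy) || (sy < x') && (x' < y')) +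
 ((y' == sx) && (sx != x')).
Proof. move=> *.
have -> : (y' < x') = false by lia. have -> : (sy < sx) = false by lia.
have -> : (y' < sx) = false by lia. have -> : (sy < x') = false by lia.
have -> : (y' == sx) = false by lia.
by rewrite !andbF !andFb. Qed.

Lemma ident_c3 x' y' sx sy hy lx : y' < hy -> sy < hy -> hy <= lx -> lx <= x' -> lx <= sx ->
 ((x' < y') && (sy < sx)) + ((y' < x') && (sx < sy)) =
 ((x' < y') && (y' < sx) || (sx < y') && (y' < x')) +
 ((y' < x') && (x' < sy) || (sy < x') && (x' < y')) +
 ((y' == sx) && (sx != x')).
Proof. move=> *.
have -> : (x' < y') = false by lia. have -> : (sx < sy) = false by lia.
have -> : (sx < y') = false by lia. have -> : (x' < sy) = false by lia.
have -> : (y' == sx) = false by lia.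
by rewrite !andbF !andFb. Qed.

Lemma ident (x y : 'I_n) : inv x y + inv y x = sb x y + sb y x + ee x y.
Proof.
rewrite /inv /sb /ee.
have := sE x; have := sE y; have := LH x; have := LH y; have := Hle x; have := Hle y.
have := block_dich Cs0 Csn x y.
move=> D hy' hx' /andP[l1 l2] /andP[l3 l4] ey ex.
case: D => [[e1 e2]|[h|h]].
- by apply: ident_c1; lia.
- by apply: (@ident_c2 _ _ _ _ (H x) (L y)); lia.
- by apply: (@ident_c3 _ _ _ _ (H y) (L x)); lia.
Qed.

Lemma sum_sb (x : 'I_n) :
  \sum_(y < n) sb x y + (nat_of_ord (s x) != x) = absdiff (s x) x.
Proof.
have -> : \sum_(y < n) sb x y =
  \sum_(y < n) ((x < y) && (y < s x) : nat) + \sum_(y < n) ((s x < y) && (y < x) : nat).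
  rewrite -big_split /=; apply: eq_bigr => y _; rewrite /sb; lia.
rewrite -(big_mkord xpredT (fun y => ((x < y) && (y < s x) : nat))).
rewrite -(big_mkord xpredT (fun y => ((s x < y) && (y < x) : nat))).
rewrite !interval_sum /absdiff.
have := ltn_ord x; have := ltn_ord (s x); lia.
Qed.

Lemma sum_ee (x : 'I_n) : \sum_(y < n) ee x y = (nat_of_ord (s x) != x).
Proof.
rewrite (bigD1 (s x)) //= /ee eqxx /= big1 ?addn0 // => y ys.
by move: ys; rewrite -(inj_eq val_inj) /= => /negbTE ->.
Qed.

Lemma shallow_s : shallow s.
Proof.
have hI : Istat s = \sum_(x < n) \sum_(y < n) inv x y.
  rewrite /Istat -sum1_card big_mkcond pair_big /=.
  by apply: eq_bigr => [[x y]] _; rewrite inE /inv; case: (_ && _).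
have hD : Dstat s = \sum_(x < n) (\sum_(y < n) sb x y + (nat_of_ord (s x) != x)).
  by rewrite /Dstat; apply: eq_bigr => x _; rewrite sum_sb.
have hF : \sum_x (s x != x) + 2 * cyc s = 2 * n.
  by rewrite /cyc -[X in _ = 2 * X]card_ord; apply: cyc_inv; exact: sinv.

have hF' : \sum_x (s x != x) = \sum_(x < n) (nat_of_ord (s x) != x) by apply: eq_bigr.

have e1 : \sum_(x < n) \sum_(y < n) (inv x y + inv y x) = 2 * Istat s.
  rewrite hI; under eq_bigr do rewrite big_split /=.
  by rewrite big_split /= [X in _ + X = _]exchange_big /=; lia.
have e2 : \sum_(x < n) \sum_(y < n) (sb x y + sb y x + ee x y) = 2 * (\sum_(x < n) \sum_(y < n) sb x y) + (\sum_(x < n) (nat_of_ord (s x) != x)).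
  under eq_bigr do rewrite !big_split /= sum_ee.
  rewrite !big_split /= [X in _ + X + _]exchange_big /=; lia.
have e3 : Dstat s = (\sum_(x < n) \sum_(y < n) sb x y) + (\sum_(x < n) (nat_of_ord (s x) != x)) by rewrite hD big_split.
have e12 : 2 * Istat s = 2 * (\sum_(x < n) \sum_(y < n) sb x y) + (\sum_(x < n) (nat_of_ord (s x) != x)).
  by rewrite -e1 -e2; apply: eq_bigr => x _; apply: eq_bigr => y _; apply: ident.
rewrite /shallow /Tstat; apply/eqP.
rewrite hF' in hF; lia.
Qed.
End Good.

Section Main.
Variable n : nat.
Hypothesis hn : 1 <= n.

Definition A231P (s : 'S_n) :=
  forall i j k : 'I_n, i < j -> j < k -> s k < s i -> s i < s j -> False.
Definition A312P (s : 'S_n) :=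
  forall i j k : 'I_n, i < j -> j < k -> s j < s k -> s k < s i -> False.

Lemma avoidP (s : 'S_n) : avoids231 s -> A231P s.
Proof.
move=> /forallP H i j k ij jk ski sij.
move: (H i) => /forallP /(_ j) /forallP /(_ k) /negP; apply.
by rewrite ij jk ski sij.
Qed.

Lemma centroP (s : 'S_n) : centrosymmetric s ->
  forall x : 'I_n, nat_of_ord (s (rev_ord x)) = n - (s x).+1.
Proof. by move=> /forallP H x; rewrite (eqP (H x)). Qed.

Lemma a312 (s : 'S_n) : avoids231 s -> centrosymmetric s -> A312P s.
Proof.
move=> /avoidP A /centroP C i j k ij jk sjk ski.
apply: (A (rev_ord k) (rev_ord j) (rev_ord i)); rewrite /= ?C;
  have := ltn_ord i; have := ltn_ord j; have := ltn_ord k;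
  have := ltn_ord (s i); have := ltn_ord (s j); have := ltn_ord (s k); lia.
Qed.

Lemma part2 (s : 'S_n) : avoids231 s -> centrosymmetric s -> shallow s.
Proof.
move=> a c; apply: shallow_s; [exact: avoidP | exact: a312].
Qed.

Lemma Cs_sym (s : 'S_n) c : centrosymmetric s -> c <= n -> Cs s c -> Cs s (n - c).
Proof.
move=> /centroP C cn /forallP H; apply/forallP => x; apply/eqP.
have := H (rev_ord x); rewrite C /= => /eqP.
have := ltn_ord x; have := ltn_ord (s x).
case: (ltnP x (n - c)) => h1; case: (ltnP (s x) (n - c)) => h2 //; lia.
Qed.

Lemma Cs_symE (s : 'S_n) c : centrosymmetric s -> c <= n -> Cs s (n - c) = Cs s c.
Proof.
move=> cs cn; apply/idP/idP; last exact: Cs_sym.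
by move/(Cs_sym cs (leq_subr _ _)); rewrite subKn.
Qed.

Definition phi (s : 'S_n) : {ffun 'I_n./2 -> bool} := [ffun t : 'I_n./2 => Cs s t.+1].

Lemma half_facts : odd n + (n./2).*2 = n.
Proof. exact: odd_double_half. Qed.

Lemma phi_inj (s1 s2 : 'S_n) : avoids231 s1 -> centrosymmetric s1 ->
  avoids231 s2 -> centrosymmetric s2 -> phi s1 = phi s2 -> s1 = s2.
Proof.
move=> a1 c1 a2 c2 e.
have small : forall c, 0 < c <= n./2 -> Cs s1 c = Cs s2 c.
  move=> c /andP[c0 ch]; have t2 : c.-1 < n./2 by lia.
  have := congr1 (fun f : {ffun 'I_n./2 -> bool} => f (Ordinal t2)) e; rewrite !ffunE /=.
  by rewrite prednK.
have allc : forall c, Cs s1 c = Cs s2 c.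
  move=> c; case: (posnP c) => [->|c0]; first by rewrite !Cs0.
  case: (leqP n c) => cn; first by rewrite !Csn.
  case: (leqP c n./2) => ch; first by apply: small; rewrite c0 ch.
  rewrite -(Cs_symE c1 (ltnW cn)) -(Cs_symE c2 (ltnW cn)).
  apply: small; have := half_facts; lia.
apply/permP => i; apply: val_inj => /=.
have A1 := avoidP a1; have B1 := a312 a1 c1.
have A2 := avoidP a2; have B2 := a312 a2 c2.
rewrite (sE A1 B1).
case: (loP (Cs0 s1) i) (hiP (Cs0 s1) (Csn s1) i) => Cl li _ [Ch ih _].
rewrite (structure A2 B2 (a := lo (Cs0 s1) i) (b := hi (Cs0 s1) (Csn s1) i)) //.
- by rewrite li ih.
- by rewrite -allc.
- by rewrite -allc.
- by move=> c hc; rewrite -allc; apply: block_noC hc.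
Qed.

Section Build.
Variable v : {ffun 'I_n./2 -> bool}.

Definition vb (k : nat) : bool := if insub k is Some t then v t else false.
Definition Cv (c : nat) : bool := ((c == 0) || (n <= c)) || vb (minn c (n - c)).-1.

Lemma Cv0 : Cv 0. Proof. by []. Qed.
Lemma Cvn c : n <= c -> Cv c.
Proof. by move=> h; rewrite /Cv h orbT. Qed.

Lemma Cv_sym c : c <= n -> Cv (n - c) = Cv c.
Proof.
move=> cn; rewrite /Cv subKn // minnC.
have -> : ((n - c == 0) || (n <= n - c)) = ((c == 0) || (n <= c)).
  lia.
by [].
Qed.

Local Notation lo' x := (lo Cv0 x).
Local Notation hi' x := (hi Cv0 Cvn x).
Definition fv x := lo' x + hi' x - 1 - x.

Lemma fv_block x : x < n -> lo' x <= fv x < hi' x /\ hi' x <= n.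
Proof.
move=> xn; have := hi_le Cv0 Cvn xn.
case: (loP Cv0 x) (hiP Cv0 Cvn x) => _ l1 _ [_ h1 _]; rewrite /fv.
lia.
Qed.

Lemma fv_same x : x < n -> lo' (fv x) = lo' x /\ hi' (fv x) = hi' x.
Proof.
move=> xn; have [b1 _] := fv_block xn.
case: (loP Cv0 x) (hiP Cv0 Cvn x) => C1 _ _ [C2 _ _].
exact: (block_unique Cv0 Cvn b1 C1 C2 (@block_noC _ _ Cv0 Cvn x)).
Qed.

Lemma fvK x : x < n -> fv (fv x) = x.
Proof.
move=> xn; have [b1 b2] := fv_block xn; have [e1 e2] := fv_same xn.
have -> : fv (fv x) = lo' (fv x) + hi' (fv x) - 1 - fv x by [].
case: (loP Cv0 x) (hiP Cv0 Cvn x) => _ l1 _ [_ h1 _].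
rewrite e1 e2; move: b1 b2; rewrite /fv; lia.
Qed.

Lemma fv_lt x : x < n -> fv x < n.
Proof. by move=> xn; have [b1 b2] := fv_block xn; lia. Qed.

Definition Fv (x : 'I_n) : 'I_n := insubd x (fv x).

Lemma FvE x : nat_of_ord (Fv x) = fv x.
Proof. by rewrite /Fv insubdK //; apply: fv_lt. Qed.

Lemma Fv_inj : injective Fv.
Proof.
move=> x y e; apply: val_inj => /=.
by rewrite -(fvK (ltn_ord x)) -(fvK (ltn_ord y)) -!FvE e.
Qed.

Definition pv : 'S_n := perm Fv_inj.

Lemma pvE x : nat_of_ord (pv x) = fv x.
Proof. by rewrite permE FvE. Qed.

Lemma Cs_pv c : Cs pv c = Cv c.
Proof.
case Cc: (Cv c).
  apply/forallP => x; apply/eqP; rewrite pvE.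
  case: (hiP Cv0 Cvn x) => _ _ H.
  have [b1 _] := fv_block (ltn_ord x).
  case: (ltnP x c) => xc.
    by have := H _ Cc xc; lia.
  apply/esym; apply: negbTE; rewrite -leqNgt; apply: contraTT xc; rewrite -ltnNge => fc.
  have fn := fv_lt (ltn_ord x).
  case: (hiP Cv0 Cvn (fv x)) => _ _ H2.
  have [b3 _] := fv_block fn.
  have := H2 _ Cc fc; rewrite (fvK (ltn_ord x)) in b3; lia.
have c0 : 0 < c by case: c Cc.
have cn : c < n by rewrite ltnNge; apply: contraFN Cc => h; rewrite Cvn.
case: (loP Cv0 c) (hiP Cv0 Cvn c) => Cl lc _ [Ch ch _].
have lc' : lo' c < c by rewrite ltn_neqAle lc andbT; apply: contraFN Cc => /eqP <-.
have ln : lo' c < n by lia.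
have [e1 e2] := block_unique Cv0 Cvn (a := lo' c) (b := hi' c) (y := lo' c) 
   ltac:(lia) Cl Ch (@block_noC _ _ Cv0 Cvn c).
apply/negbTE/forallP => H; have := H (Ordinal ln); rewrite pvE /fv /= e1 e2.
rewrite lc'; lia.
Qed.

Lemma phi_pv : phi pv = v.
Proof.
apply/ffunP => t; rewrite ffunE Cs_pv /Cv.
have := ltn_ord t; have := half_facts => h1 h2.
have -> : (t.+1 == 0) || (n <= t.+1) = false by lia.
have -> : (minn t.+1 (n - t.+1)).-1 = t by lia.
by rewrite /vb valK.
Qed.

Lemma pv_centro : centrosymmetric pv.
Proof.
apply/forallP => x; apply/eqP; apply: val_inj => /=; rewrite !pvE.
have xn := ltn_ord x.
have [b1 b2] := fv_block xn.
case: (loP Cv0 x) (hiP Cv0 Cvn x) => C1 l1 _ [C2 h1 _].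
have noC : forall c, n - hi' x < c < n - lo' x -> ~~ Cv c.
  move=> c hc; rewrite -Cv_sym; last by lia.
  by apply: (@block_noC _ _ Cv0 Cvn x); lia.
have Ca : Cv (n - hi' x) by rewrite Cv_sym.
have Cb : Cv (n - lo' x) by rewrite Cv_sym //; lia.
have [e1 e2] := block_unique Cv0 Cvn (a := n - hi' x) (b := n - lo' x) (y := n - x.+1)
  ltac:(lia) Ca Cb noC.
rewrite /= /fv e1 e2; move: b1; rewrite /fv; lia.
Qed.

Lemma pv_avoid : avoids231 pv.
Proof.
apply/forallP => i; apply/forallP => j; apply/forallP => k; apply/negP.
move=> /and4P[ij jk ski sij]; move: ski sij; rewrite !pvE.
have [bi _] := fv_block (ltn_ord i).
have [bj _] := fv_block (ltn_ord j).
have [bk _] := fv_block (ltn_ord k).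
case: (loP Cv0 i) (hiP Cv0 Cvn i) => _ li _ [_ hi1 _].
case: (loP Cv0 j) (hiP Cv0 Cvn j) => Cj lj _ [_ hj _].
case: (loP Cv0 k) (hiP Cv0 Cvn k) => _ lk Hk [_ hk _].
have jk' := Hk _ Cj (leq_trans lj (ltnW jk)).
have := block_dich Cv0 Cvn i j.
move: bi bj bk; rewrite /fv; lia.
Qed.

End Build.

Lemma count_main :
  #|[set s : 'S_n | shallow s && avoids231 s && centrosymmetric s]| = 2 ^ n./2.
Proof.
have -> : [set s : 'S_n | shallow s && avoids231 s && centrosymmetric s] =
          [set s : 'S_n | avoids231 s && centrosymmetric s].
  apply/setP => s; rewrite !inE -andbA; apply/andP/idP => [[_ ->]//|/andP[a c]].
  by rewrite part2 // a c.
rewrite -(card_in_imset (f := phi)); last first.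
  by move=> s1 s2; rewrite !inE => /andP[a1 c1] /andP[a2 c2]; apply: phi_inj.
have -> : phi @: [set s : 'S_n | avoids231 s && centrosymmetric s] = setT.
  apply/setP => w; rewrite inE; apply/imsetP; exists (pv w).
    by rewrite inE pv_avoid pv_centro.
  by rewrite phi_pv.
by rewrite cardsT card_ffun card_bool card_ord.
Qed.

End Main.

Theorem theorem4p7 (n : nat) (hn : 1 <= n) :
  #|[set s : 'S_n | shallow s && avoids231 s && centrosymmetric s]| = 2 ^ n./2
  /\ (forall s : 'S_n, avoids231 s -> centrosymmetric s -> shallow s).
Proof.
split; first exact: count_main.
by move=> s; apply: part2.
Qed.
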